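(* Let $l\ge 1$, $d\ge 2$. The cone $\sigma^\vee\subset M_\mathbf{R}$ has exactly $d^l$ facets: for each $\vec{j}=(j_1,\dots,j_l)\in\{1,\dots,d\}^l$, the cone $\tau_{\vec j}$ generated by $\{e_{ij}:1\le i\le l,\ j\ne j_i\}$ is a facet, and these are all the facets. Moreover $\sigma^\vee=\bigcap_{\vec j}\{\varphi_{\vec j}\ge0\}$, where $\varphi_{\vec j}$ is the linear functional on $M$ with $\varphi_{\vec j}(e_{ij})=0$ for $j\ne j_i$ and $\varphi_{\vec j}(e_{ij_i})=1$.
   Context: Let $\mathbf{Z}^{ld}$ have basis $e_{ij}$ ($1\le i\le l$, $1\le j\le d$), $\epsilon_i=e_{i1}+\dots+e_{id}$, $L\subset\mathbf{Z}^{ld}$ the (saturated) subgroup generated by $\epsilon_1-\epsilon_2,\dots,\epsilon_1-\epsilon_l$, and $M=\mathbf{Z}^{ld}/L$ (a lattice of rank $ld-l+1$); write $e_{ij}$ and $\epsilon=\epsilon_1=\dots=\epsilon_l$ for their images in $M$. $\sigma^\vee\subset M_\mathbf{R}$ is the cone generated by all $e_{ij}$. *)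

(* Defs.v *)
From HB Require Import structures.
From mathcomp Require Import all_boot all_order all_algebra.
Set Implicit Arguments. Unset Strict Implicit. Unset Printing Implicit Defensive.
Import Order.TTheory GRing.Theory Num.Theory.
Local Open Scope ring_scope.

(* Conventions: Z^{ld} is realised (after tensoring with R) as the space of
   l x d matrices 'M[R]_(l,d); e_ij = delta_mx i j (indices 0-based).
   M_R = R^{ld}/L_R is realised as 'rV[R]_n together with a linear surjection
   pi : 'M_(l,d) -> 'rV_n whose kernel is exactly L_R. *)

Definition eps (R : nzRingType) (l d : nat) (i : 'I_l) : 'M[R]_(l, d) :=
  \sum_(j < d) delta_mx i j.

Definition in_L (R : nzRingType) (l d : nat) (i0 : 'I_l) (x : 'M[R]_(l, d)) : Prop :=
  exists a : 'I_l -> R, x = \sum_(i < l) a i *: (eps R d i0 - eps R d i).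

Definition cone_gen (R : realFieldType) (n : nat) (I : finType) (P : pred I)
  (g : I -> 'rV[R]_n) (v : 'rV[R]_n) : Prop :=
  exists lam : I -> R, (forall k, 0 <= lam k) /\ v = \sum_(k | P k) lam k *: g k.

Definition evalf (R : nzRingType) (n : nat) (w : 'cV[R]_n) (v : 'rV[R]_n) : R :=
  (v *m w) 0 0.

Definition is_face (R : realFieldType) (n : nat) (C F : 'rV[R]_n -> Prop) : Prop :=
  exists w : 'cV[R]_n,
    (forall v, C v -> 0 <= evalf w v) /\
    (forall v, F v <-> (C v /\ evalf w v = 0)).

Definition dim_span (R : realFieldType) (n : nat) (S : 'rV[R]_n -> Prop) (k : nat) : Prop :=
  (exists A : 'M[R]_(k, n), (forall i, S (row i A)) /\ \rank A = k) /\
  (forall A : 'M[R]_(k.+1, n), (forall i, S (row i A)) -> (\rank A < k.+1)%N).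

Definition is_facet (R : realFieldType) (n : nat) (C F : 'rV[R]_n -> Prop) : Prop :=
  is_face C F /\ exists k, dim_span C k.+1 /\ dim_span F k.

Definition sigma_dual (R : realFieldType) (l d n : nat)
  (pi : 'M[R]_(l, d) -> 'rV[R]_n) : 'rV[R]_n -> Prop :=
  cone_gen predT (fun p : 'I_l * 'I_d => pi (delta_mx p.1 p.2)).

Definition tau (R : realFieldType) (l d n : nat)
  (pi : 'M[R]_(l, d) -> 'rV[R]_n) (jv : {ffun 'I_l -> 'I_d}) : 'rV[R]_n -> Prop :=
  cone_gen (fun p : 'I_l * 'I_d => p.2 != jv p.1)
           (fun p : 'I_l * 'I_d => pi (delta_mx p.1 p.2)).

Definition is_phi (R : realFieldType) (l d n : nat)
  (pi : 'M[R]_(l, d) -> 'rV[R]_n) (jv : {ffun 'I_l -> 'I_d}) (w : 'cV[R]_n) : Prop :=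
  forall (i : 'I_l) (j : 'I_d), evalf w (pi (delta_mx i j)) = (j == jv i)%:R.

(* Main.v *)
Require Import Defs.
From HB Require Import structures.
From mathcomp Require Import all_boot all_order all_algebra.
From mathcomp Require Import ring.
Import Order.TTheory GRing.Theory Num.Theory.
Local Open Scope ring_scope.
Set Implicit Arguments. Unset Strict Implicit.

Lemma dim_span_ext (R : realFieldType) n (S S' : 'rV[R]_n -> Prop) k :
  (forall v, S v <-> S' v) -> Defs.dim_span S k -> Defs.dim_span S' k.
Proof.
move=> e [[A [SA rA]] h]; split; first by exists A; split=> // i; apply/e.
by move=> B SB; apply: h => i; apply/e.
Qed.

Lemma dim_span_of (R : realFieldType) n (S : 'rV[R]_n -> Prop) k (B : 'M[R]_(k,n)) :
  row_free B -> (forall i, S (row i B)) -> (forall v, S v -> (v <= B)%MS) ->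
  Defs.dim_span S k.
Proof.
move=> fB SB BS; split; first by exists B; split => //; apply/eqP.
move=> A SA; have: (A <= B)%MS by apply/row_subP => i; exact: BS.
move/mxrankS; rewrite (eqP fB) => h; exact: leq_ltn_trans h (ltnSn k).
Qed.

Lemma extract (R : realFieldType) m' m n (h : (m' <= m)%N) (A : 'M[R]_(m,n)) :
  row_free A -> row_free (\matrix_(i < m') row (widen_ord h i) A).
Proof.
move=> fA; apply: inj_row_free => v.
set Sel := \matrix_(i < m', j < m) (widen_ord h i == j)%:R : 'M[R]_(m', m).
have -> : \matrix_(i < m') row (widen_ord h i) A = Sel *m A.
  apply/row_matrixP => i; rewrite rowK row_mul [LHS]rowE; congr (_ *m _).
  by apply/rowP => j; rewrite !mxE eqxx eq_sym.
rewrite mulmxA => h0; have h1 : v *m Sel = 0.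
  by apply: (row_free_inj fA); rewrite h0 mul0mx.
apply/rowP => i; have := congr1 (fun M : 'M[R]_(1,m) => M 0 (widen_ord h i)) h1; rewrite /= !mxE.
rewrite (bigD1 i) //= !mxE eqxx mulr1 big1 ?addr0 // => k /negbTE ki.
rewrite !mxE; have -> : (widen_ord h k == widen_ord h i) = false.
  by apply/negbTE; apply: contraFN ki => /eqP/(congr1 val) /= /val_inj ->.
by rewrite mulr0.
Qed.

Lemma dim_unique (R : realFieldType) n (S : 'rV[R]_n -> Prop) k k' :
  Defs.dim_span S k -> Defs.dim_span S k' -> k = k'.
Proof.
suff H: forall a b, Defs.dim_span S a -> Defs.dim_span S b -> (a <= b)%N.
  by move=> h h'; apply/eqP; rewrite eqn_leq (H _ _ h h') (H _ _ h' h).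
move=> a b [[A [SA rA]] _] [_ hb]; rewrite leqNgt; apply/negP => ba.
have fA : row_free A by rewrite /row_free rA.
have fA' := extract ba fA.
have : (\rank (\matrix_(i < b.+1) row (widen_ord ba i) A) < b.+1)%N.
  by apply: hb => i; rewrite rowK; exact: SA.
by rewrite (eqP fA') ltnn.
Qed.

Definition genmx (R : realFieldType) n (I : finType) (P : pred I) (g : I -> 'rV[R]_n)
  : 'M[R]_(#|P|, n) := \matrix_(r < #|P|) g (enum_val r).

Lemma gen_row (R : realFieldType) n (I : finType) (P : pred I) (g : I -> 'rV[R]_n) p :
  P p -> (g p <= genmx P g)%MS.
Proof.
move=> Pp; have Pp' : p \in P by [].
apply: (submx_trans _ (row_sub (enum_rank_in Pp' p) (genmx P g))).
by rewrite rowK (enum_rankK_in Pp' Pp').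
Qed.

Lemma cone_sub (R : realFieldType) n m (I : finType) (P : pred I) (g : I -> 'rV[R]_n)
  (B : 'M[R]_(m,n)) v :
  (forall p, P p -> (g p <= B)%MS) -> cone_gen P g v -> (v <= B)%MS.
Proof. move=> h [lam [_ ->]]; apply: summx_sub => p Pp; exact/scalemx_sub/h. Qed.

Lemma gen_in_cone (R : realFieldType) n (I : finType) (P : pred I) (g : I -> 'rV[R]_n) q :
  P q -> cone_gen P g (g q).
Proof.
move=> Pq; exists (fun p => (p == q)%:R); split => [p|]; first exact: ler0n.
rewrite (bigD1 q) //= eqxx scale1r big1 ?addr0 // => p /andP[_ /negbTE ->].
by rewrite scale0r.
Qed.

Lemma cone_ext (R : realFieldType) n (I : finType) (P Q : pred I) (g : I -> 'rV[R]_n) v :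
  P =1 Q -> cone_gen P g v <-> cone_gen Q g v.
Proof.
move=> e; split=> [[lam [h ->]]|[lam [h ->]]]; exists lam; split=> //;
  by apply: eq_bigl => p; rewrite e.
Qed.

Lemma evalf_sum (R : realFieldType) n (I : finType) (P : pred I) (w : 'cV[R]_n)
   (lam : I -> R) (g : I -> 'rV[R]_n) :
  evalf w (\sum_(k | P k) lam k *: g k) = \sum_(k | P k) lam k * evalf w (g k).
Proof. by rewrite /evalf mulmx_suml summxE; apply: eq_bigr => k _; rewrite -scalemxAl mxE. Qed.

Lemma face_cone (R : realFieldType) n (I : finType) (P : pred I) (g : I -> 'rV[R]_n)
  (w : 'cV[R]_n) v :
  (forall p, P p -> 0 <= evalf w (g p)) ->
  (cone_gen P g v /\ evalf w v = 0) <->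
  cone_gen (fun p => P p && (evalf w (g p) == 0)) g v.
Proof.
move=> hw; split.
- move=> [[lam [hl ev]] h0]; exists lam; split=> //; rewrite ev.
  rewrite (bigID (fun p => evalf w (g p) == 0)) /= [X in _ + X]big1 ?addr0 //.
  move=> p /andP[Pp nz]; rewrite ev evalf_sum in h0.
  have := psumr_eq0P (fun p Pp => mulr_ge0 (hl p) (hw p Pp)) h0 Pp.
  move/eqP; rewrite mulf_eq0 (negbTE nz) orbF => /eqP ->; by rewrite scale0r.
- move=> [lam [hl ->]]; split.
  + exists (fun p => if evalf w (g p) == 0 then lam p else 0); split.
      by move=> p; case: ifP => _ //; exact: hl.
    symmetry; rewrite (bigID (fun p => evalf w (g p) == 0)) /= [X in _ + X]big1 ?addr0.
    by apply: eq_bigr => p /andP[_ ->].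
    by move=> p /andP[_ /negbTE ->]; rewrite scale0r.
  + by rewrite evalf_sum big1 // => p /andP[_ /eqP ->]; rewrite mulr0.
Qed.

Definition indep (R : realFieldType) n (I : finType) (P : pred I) (g : I -> 'rV[R]_n) :=
  forall c : I -> R, \sum_(p | P p) c p *: g p = 0 -> forall p, P p -> c p = 0.

Lemma genmx_free (R : realFieldType) n (I : finType) (P : pred I) (g : I -> 'rV[R]_n) :
  indep P g -> row_free (genmx P g).
Proof.
move=> hi; apply: inj_row_free => u hu; apply/rowP => r; rewrite mxE.
have Pr : enum_val r \in P := enum_valP r.
pose c p := u 0 (enum_rank_in Pr p).
have := hi c _ (enum_val r) Pr; rewrite /c enum_valK_in; apply.
have e := big_enum_val (A:=P) (fun p => c p *: g p).
rewrite e -[RHS]hu mulmx_sum_row; apply: eq_bigr => i _.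
by rewrite /c enum_valK_in rowK.
Qed.

Lemma indep_sub (R : realFieldType) n (I : finType) (P Q : pred I) (g : I -> 'rV[R]_n) :
  (forall p, P p -> Q p) -> indep Q g -> indep P g.
Proof.
move=> PQ hQ c hc p Pp.
have := hQ (fun p => if P p then c p else 0) _ p (PQ p Pp); rewrite Pp; apply.
rewrite (bigID P) /= [X in _ + X]big1 ?addr0; last first.
  by move=> q /andP[_ /negbTE ->]; rewrite scale0r.
rewrite -[RHS]hc; apply: eq_big => q; last by move=> /andP[_ ->].
by case Pq: (P q); rewrite ?andbT ?andbF //; apply: PQ.
Qed.

Definition gg (R : realFieldType) l d n (pi : {linear 'M[R]_(l, d) -> 'rV[R]_n})
  (p : 'I_l * 'I_d) : 'rV[R]_n := pi (delta_mx p.1 p.2).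

Definition Tset l d (jv : {ffun 'I_l -> 'I_d}) : pred ('I_l * 'I_d) :=
  [pred p | p.2 != jv p.1].
Definition Sset l d (i0 : 'I_l) (jv : {ffun 'I_l -> 'I_d}) : pred ('I_l * 'I_d) :=
  [pred p | (p == (i0, jv i0)) || (p.2 != jv p.1)].

Lemma eps_entry (R : nzRingType) l d (i' i : 'I_l) (j : 'I_d) :
  eps R d i' i j = (i == i')%:R.
Proof.
rewrite /eps summxE (bigD1 j) //= mxE eqxx andbT big1 ?addr0 // => k /negbTE kj.
by rewrite mxE (eq_sym j k) kj andbF.
Qed.

Lemma Lsum_entry (R : realFieldType) l d (a : 'I_l -> R) (i0 i : 'I_l) (j : 'I_d) :
  (\sum_(i' < l) a i' *: (eps R d i0 - eps R d i')) i j =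
  (i == i0)%:R * (\sum_i' a i') - a i.
Proof.
rewrite summxE; under eq_bigr do rewrite !mxE !eps_entry mulrBr.
rewrite sumrB mulr_sumr; congr (_ - _); first by apply: eq_bigr => k _; rewrite mulrC.
rewrite (bigD1 i) //= eqxx mulr1 big1 ?addr0 // => k /negbTE ki.
by rewrite eq_sym ki mulr0.
Qed.

Lemma delta_ne (R : nzRingType) l d (p : 'I_l * 'I_d) i j :
  p != (i, j) -> (delta_mx p.1 p.2 : 'M[R]_(l,d)) i j = 0.
Proof.
case: p => a b /=; rewrite xpair_eqE negb_and mxE => /orP[] /negbTE h.
  by rewrite eq_sym h.
by rewrite (eq_sym j) h andbF.
Qed.

Lemma X_entry (R : realFieldType) l d (c : 'I_l * 'I_d -> R) (P : pred ('I_l * 'I_d)) i j :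
  (\sum_(p | P p) c p *: (delta_mx p.1 p.2 : 'M[R]_(l,d))) i j =
  if P (i, j) then c (i, j) else 0.
Proof.
rewrite summxE; case Pij: (P (i,j)).
  rewrite (bigD1 (i,j)) //= !mxE !eqxx mulr1 big1 ?addr0 // => p /andP[_ ne].
  by rewrite mxE delta_ne ?mulr0.
apply: big1 => p Pp; have [e|ne] := eqVneq p (i,j); first by rewrite e Pij in Pp.
by rewrite mxE delta_ne ?mulr0.
Qed.

Lemma pi_eps (R : realFieldType) l d n (hl : (0 < l)%N)
  (pi : {linear 'M[R]_(l, d) -> 'rV[R]_n})
  (pi_ker : forall x : 'M[R]_(l, d), pi x = 0 <-> in_L (Ordinal hl) x) i :
  pi (eps R d i) = pi (eps R d (Ordinal hl)).
Proof.
have : pi (eps R d (Ordinal hl) - eps R d i) = 0.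
  apply/pi_ker; exists (fun i' => (i' == i)%:R).
  rewrite (bigD1 i) //= eqxx scale1r big1 ?addr0 // => k /negbTE ->.
  by rewrite scale0r.
by rewrite linearB => /eqP; rewrite subr_eq0 => /eqP.
Qed.

Lemma graph_id (R : realFieldType) l d n (hl : (0 < l)%N)
  (pi : {linear 'M[R]_(l, d) -> 'rV[R]_n})
  (pi_ker : forall x : 'M[R]_(l, d), pi x = 0 <-> in_L (Ordinal hl) x)
  (jv : {ffun 'I_l -> 'I_d}) i :
  pi (delta_mx i (jv i)) = (\sum_j pi (delta_mx (Ordinal hl) j))
     - (\sum_(j | j != jv i) pi (delta_mx i j)).
Proof.
have := pi_eps pi_ker i; rewrite /eps !linear_sum (bigD1 (jv i)) //= => e.
by rewrite -e sumrN addrK.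
Qed.

Lemma sigma_sub (R : realFieldType) l d n (hl : (0 < l)%N)
  (pi : {linear 'M[R]_(l, d) -> 'rV[R]_n})
  (pi_ker : forall x : 'M[R]_(l, d), pi x = 0 <-> in_L (Ordinal hl) x)
  (jv : {ffun 'I_l -> 'I_d}) p :
  (gg pi p <= genmx (Sset (Ordinal hl) jv) (gg pi))%MS.
Proof.
case Sp: (Sset (Ordinal hl) jv p); first exact: gen_row.
case: p Sp => i j; rewrite /Sset inE /= => /norP[ne /negPn /eqP ->].
rewrite /gg /= (graph_id pi_ker).
apply: addmx_sub.
  apply: summx_sub => j' _; apply: (gen_row (gg pi) (p := (Ordinal hl, j'))).
  rewrite /= xpair_eqE eqxx /=; by case: eqP.
rewrite -scaleN1r; apply: scalemx_sub; apply: summx_sub => j' ne'.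
by apply: (gen_row (gg pi) (p := (i, j'))); rewrite /= ne' orbT.
Qed.

Lemma indep_S (R : realFieldType) l d n (hl : (0 < l)%N)
  (pi : {linear 'M[R]_(l, d) -> 'rV[R]_n})
  (pi_ker : forall x : 'M[R]_(l, d), pi x = 0 <-> in_L (Ordinal hl) x)
  (jv : {ffun 'I_l -> 'I_d}) :
  indep (Sset (Ordinal hl) jv) (gg pi).
Proof.
move=> c hc.
have h0 : pi (\sum_(p | Sset (Ordinal hl) jv p) c p *: delta_mx p.1 p.2) = 0.
  by rewrite linear_sum -[RHS]hc; apply: eq_bigr => p _; rewrite linearZ.
move/pi_ker: h0 => [a ha].
have ai : forall i, i != Ordinal hl -> a i = 0.
  move=> i ne; have := congr1 (fun M : 'M[R]_(l,d) => M i (jv i)) ha.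
  rewrite /= X_entry Lsum_entry (negbTE ne) mul0r sub0r /Sset /= xpair_eqE (negbTE ne) eqxx /=.
  by move/eqP; rewrite eq_sym oppr_eq0 => /eqP.
have X0 : \sum_(p | Sset (Ordinal hl) jv p) c p *: (delta_mx p.1 p.2 : 'M[R]_(l,d)) = 0.
  rewrite ha big1 // => i _; case: (eqVneq i (Ordinal hl)) => [->|ne].
    by rewrite subrr scaler0.
  by rewrite ai // scale0r.
move=> p Sp; have := congr1 (fun M : 'M[R]_(l,d) => M p.1 p.2) X0.
by rewrite /= X_entry -surjective_pairing Sp mxE.
Qed.

Lemma card_S l d (i0 : 'I_l) (jv : {ffun 'I_l -> 'I_d}) :
  #|Sset i0 jv| = #|Tset jv|.+1.
Proof.
rewrite (eq_card (B := [predU1 (i0, jv i0) & Tset jv])) ?cardU1.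
  by rewrite !inE /= eqxx.
by move=> p; rewrite !inE.
Qed.

Lemma evalfB (R : realFieldType) n (w : 'cV[R]_n) (a b : 'rV[R]_n) : evalf w (a - b) = evalf w a - evalf w b.
Proof. by rewrite /evalf mulmxBl !mxE. Qed.

Lemma evalf_sum1 (R : realFieldType) n (I : finType) (P : pred I) (w : 'cV[R]_n)
   (g : I -> 'rV[R]_n) :
  evalf w (\sum_(k | P k) g k) = \sum_(k | P k) evalf w (g k).
Proof. by rewrite /evalf mulmx_suml summxE. Qed.

Lemma dim_sigma (R : realFieldType) l d n (hl : (0 < l)%N)
  (pi : {linear 'M[R]_(l, d) -> 'rV[R]_n})
  (pi_ker : forall x : 'M[R]_(l, d), pi x = 0 <-> in_L (Ordinal hl) x)
  (jv : {ffun 'I_l -> 'I_d}) :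
  Defs.dim_span (sigma_dual pi) (#|Tset jv|.+1).
Proof.
rewrite -(card_S (Ordinal hl)).
apply: (dim_span_of (genmx_free (indep_S pi_ker (jv:=jv)))).
  by move=> r; rewrite rowK; exact: (@gen_in_cone _ _ _ predT (gg pi)).
by move=> v; apply: cone_sub => p _; exact: sigma_sub.
Qed.

Lemma dim_tau (R : realFieldType) l d n (hl : (0 < l)%N)
  (pi : {linear 'M[R]_(l, d) -> 'rV[R]_n})
  (pi_ker : forall x : 'M[R]_(l, d), pi x = 0 <-> in_L (Ordinal hl) x)
  (jv : {ffun 'I_l -> 'I_d}) :
  Defs.dim_span (tau pi jv) #|Tset jv|.
Proof.
have hi : indep (Tset jv) (gg pi).
  apply: (indep_sub _ (indep_S pi_ker (jv:=jv))) => p; rewrite /Tset /Sset /= => ->.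
  by rewrite orbT.
apply: (dim_span_of (genmx_free hi)).
  move=> r; rewrite rowK; have := enum_valP r; rewrite /Tset unfold_in /= => h.
  exact: (@gen_in_cone _ _ _ (fun p : 'I_l * 'I_d => p.2 != jv p.1) (gg pi) _ h).
move=> v; apply: cone_sub => p Pp; apply: gen_row; by rewrite /Tset /=.
Qed.

Lemma phi_exists (R : realFieldType) l d n (hl : (0 < l)%N)
  (pi : {linear 'M[R]_(l, d) -> 'rV[R]_n})
  (pi_ker : forall x : 'M[R]_(l, d), pi x = 0 <-> in_L (Ordinal hl) x)
  (jv : {ffun 'I_l -> 'I_d}) :
  exists w, is_phi pi jv w.
Proof.
have /row_freeP [B hB] := genmx_free (indep_S pi_ker (jv:=jv)).
set G := genmx _ _ in hB.
pose t : 'cV[R]_#|Sset (Ordinal hl) jv| :=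
  \col_r (((enum_val r).2 == jv (enum_val r).1)%:R).
exists (B *m t).
have E : G *m (B *m t) = t by rewrite mulmxA hB mul1mx.
have rowG : forall r, row r G = gg pi (enum_val r) by move=> r; rewrite rowK.
have onS : forall p, Sset (Ordinal hl) jv p ->
    evalf (B *m t) (gg pi p) = (p.2 == jv p.1)%:R.
  move=> p Sp; have Sp' : p \in Sset (Ordinal hl) jv by [].
  rewrite -{1}(enum_rankK_in Sp' Sp') -rowG /evalf -row_mul E !mxE.
  by rewrite (enum_rankK_in Sp' Sp').
move=> i j; case Sp: (Sset (Ordinal hl) jv (i, j)); first exact: (onS (i, j)).
move: Sp; rewrite /Sset /= => /norP[ne /negPn /eqP ->].
rewrite (graph_id pi_ker) evalfB !evalf_sum1 eqxx.
rewrite [X in _ - X]big1 ?subr0; last first.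
  move=> j' nj; have := onS (i, j'); rewrite /gg /= => ->; first by rewrite (negbTE nj).
  by rewrite /Sset /= nj orbT.
rewrite (bigD1 (jv (Ordinal hl))) //= big1 ?addr0.
  have := onS (Ordinal hl, jv (Ordinal hl)); rewrite /gg /= eqxx => -> //.
  by rewrite /Sset /= eqxx.
move=> j' nj; have := onS (Ordinal hl, j'); rewrite /gg /= => ->.
  by rewrite (negbTE nj).
by rewrite /Sset /= nj orbT.
Qed.

Lemma phi_pos (R : realFieldType) l d n (pi : {linear 'M[R]_(l, d) -> 'rV[R]_n})
  (jv : {ffun 'I_l -> 'I_d}) w :
  is_phi pi jv w -> forall p, predT p -> 0 <= evalf w (gg pi p).
Proof. by move=> hw p _; rewrite /gg hw ler0n. Qed.

Lemma tau_face (R : realFieldType) l d n (pi : {linear 'M[R]_(l, d) -> 'rV[R]_n})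
  (jv : {ffun 'I_l -> 'I_d}) w :
  is_phi pi jv w -> forall v, tau pi jv v <-> (sigma_dual pi v /\ evalf w v = 0).
Proof.
move=> hw v; have e := face_cone v (phi_pos hw).
have e2 : (fun p : 'I_l * 'I_d => p.2 != jv p.1) =1
          (fun p => predT p && (evalf w (gg pi p) == 0)).
  move=> p /=. rewrite /gg hw. case: (p.2 == jv p.1); by rewrite ?oner_eq0 ?eqxx.
split=> h.
  exact: (proj2 e (proj1 (cone_ext (gg pi) v e2) h)).
exact: (proj2 (cone_ext (gg pi) v e2) (proj1 e h)).
Qed.

Lemma pi_decomp (R : realFieldType) l d n (pi : {linear 'M[R]_(l, d) -> 'rV[R]_n})
  (x : 'M[R]_(l, d)) :
  pi x = \sum_(p | predT p) x p.1 p.2 *: gg pi p.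
Proof.
rewrite {1}(matrix_sum_delta x) pair_bigA linear_sum; apply: eq_bigr => p _.
by rewrite linearZ.
Qed.

Lemma sigma_of_phi (R : realFieldType) l d n (hl : (0 < l)%N) (hd : (2 <= d)%N)
  (pi : {linear 'M[R]_(l, d) -> 'rV[R]_n})
  (pi_surj : forall v : 'rV[R]_n, exists x, pi x = v)
  (pi_ker : forall x : 'M[R]_(l, d), pi x = 0 <-> in_L (Ordinal hl) x)
  (W : {ffun 'I_l -> 'I_d} -> 'cV[R]_n) :
  (forall jv, is_phi pi jv (W jv)) ->
  forall v, (forall jv, 0 <= evalf (W jv) v) -> sigma_dual pi v.
Proof.
move=> hW v hv; have [x ex] := pi_surj v; rewrite -ex in hv *.
pose j0 : 'I_d := Ordinal (ltnW hd).
pose jm := [ffun i => Order.arg_min j0 predT (fun j => x i j)].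
have jmin : forall i j, x i (jm i) <= x i j.
  move=> i j; rewrite ffunE.
  by case: (@arg_minP _ _ _ j0 predT (fun j => x i j) isT) => k _ hk; apply: hk.
pose m i := x i (jm i).
pose s := \sum_i m i.
have s0 : 0 <= s.
  have := hv jm; rewrite pi_decomp evalf_sum.
  under eq_bigr => p _ do rewrite /gg hW.
  rewrite -(pair_bigA _ (fun i j => x i j * (j == jm i)%:R)).
  congr (_ <= _); apply: eq_bigr => i _.
  rewrite (bigD1 (jm i)) //= eqxx mulr1 big1 ?addr0 // => j /negbTE ->.
  by rewrite mulr0.
pose lam p := (x p.1 p.2 - m p.1) + s / l%:R.
exists lam; split.
  move=> p; apply: addr_ge0; first by rewrite subr_ge0 jmin.
  by apply: divr_ge0 => //; rewrite ler0n.
have e : \sum_(p | predT p) lam p *: pi (delta_mx p.1 p.2) =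
         pi (\sum_(p | predT p) lam p *: (delta_mx p.1 p.2 : 'M[R]_(l,d))).
  by rewrite linear_sum; apply: eq_bigr => p _; rewrite linearZ.
rewrite e; apply/eqP; rewrite -subr_eq0 -linearB; apply/eqP/pi_ker.
exists (fun i => s / l%:R - m i).
apply/matrixP => i j; rewrite Lsum_entry !mxE X_entry /= /lam /=.
have -> : \sum_(i' < l) (s / l%:R - m i') = 0.
  rewrite sumrB sumr_const card_ord -[s / _ *+ l]mulr_natr divfK ?subrr //.
  by rewrite pnatr_eq0 -lt0n.
by rewrite mulr0; ring.
Qed.

Lemma facet_is_tau (R : realFieldType) l d n (hl : (0 < l)%N)
  (pi : {linear 'M[R]_(l, d) -> 'rV[R]_n})
  (pi_ker : forall x : 'M[R]_(l, d), pi x = 0 <-> in_L (Ordinal hl) x)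
  (F : 'rV[R]_n -> Prop) :
  is_facet (sigma_dual pi) F ->
  exists jv : {ffun 'I_l -> 'I_d}, forall v, F v <-> tau pi jv v.
Proof.
move=> [[w [hw hF]] [k [hk1 hk2]]].
pose a p := evalf w (gg pi p).
have a0 : forall p, predT p -> 0 <= a p.
  by move=> p _; apply: hw; exact: (@gen_in_cone _ _ _ predT (gg pi)).
have hFc : forall v, F v <-> cone_gen (fun p => predT p && (a p == 0)) (gg pi) v.
  by move=> v; rewrite -(face_cone v a0); apply: hF.
have rowsum : forall i, \sum_j a (i, j) = evalf w (pi (eps R d (Ordinal hl))).
  move=> i; rewrite -(pi_eps pi_ker i) /eps linear_sum evalf_sum1.
  by apply: eq_bigr.
case: (boolP [exists i, [forall j, a (i, j) == 0]]) => [/existsP[i /forallP hi]|].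
  have az : forall p, a p = 0.
    case=> i' j'; have : \sum_j a (i', j) = 0.
      rewrite rowsum -(rowsum i); apply: big1 => j _; exact/eqP.
    by move/(psumr_eq0P (fun j _ => a0 (i', j) isT)); apply.
  have hS : forall v, F v <-> sigma_dual pi v.
    move=> v; rewrite hFc; apply: cone_ext => p /=; by rewrite az eqxx.
  have := dim_unique (dim_span_ext hS hk2) hk1.
  by move=> /eqP; rewrite eqn_leq ltnn andbF.
move/existsPn => hnz.
have hex : forall i, exists j, a (i, j) != 0.
  by move=> i; have /forallPn [j hj] := hnz i; exists j.
pose jv := [ffun i => xchoose (hex i)].
have jvnz : forall i, a (i, jv i) != 0.
  by move=> i; rewrite ffunE; exact: (xchooseP (hex i)).
have ek : k = #|Tset jv|.
  by have := dim_unique hk1 (dim_sigma pi_ker jv) => -[].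
case: (boolP [exists p, (p.2 != jv p.1) && (a p != 0)]) => [/existsP[p /andP[Tp ap]]|].
  exfalso.
  pose Q := [predD1 Tset jv & p].
  have ZQ : forall q, predT q && (a q == 0) -> Q q.
    move=> [i j] /= /eqP aq; rewrite /Q /Tset !inE /=; apply/andP; split.
      by apply: contraNneq ap => <-; rewrite aq.
    by apply: contraNneq (jvnz i) => <-; rewrite aq.
  move: hk2 => [[A [FA rA]] _].
  have sA : (A <= genmx Q (gg pi))%MS.
    by apply/row_subP => r; apply: (cone_sub (P := fun q => predT q && (a q == 0)));
      [move=> q /ZQ; exact: gen_row | apply/hFc].
  have := leq_trans (mxrankS sA) (rank_leq_row _).
  rewrite rA ek (cardD1 p (Tset jv)).
  have -> : p \in Tset jv by rewrite inE.
  by rewrite add1n ltnn.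
move/existsPn => hT; exists jv => v; rewrite hFc; apply: cone_ext => p /=.
have := hT p; case: (eqVneq p.2 (jv p.1)) => [e _|ne].
  have hap : a p != 0 by rewrite [p]surjective_pairing e; exact: jvnz.
  by rewrite (negbTE hap).
by rewrite /= negbK => /eqP ->; rewrite eqxx.
Qed.

Unset Implicit Arguments.

Theorem mainTheorem12 (R : realFieldType) (l d : nat) (hl : (0 < l)%N) (hd : (2 <= d)%N)
  (n : nat) (pi : {linear 'M[R]_(l, d) -> 'rV[R]_n})
  (pi_surj : forall v : 'rV[R]_n, exists x, pi x = v)
  (pi_ker : forall x : 'M[R]_(l, d), pi x = 0 <-> in_L (Ordinal hl) x) :
  (* each tau_jv is a facet of sigma^vee *)
  (forall jv : {ffun 'I_l -> 'I_d}, is_facet (sigma_dual pi) (tau pi jv)) /\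
  (* the tau_jv are pairwise distinct (so there are d^l of them) *)
  (forall jv jv' : {ffun 'I_l -> 'I_d},
     (forall v, tau pi jv v <-> tau pi jv' v) -> jv = jv') /\
  (* every facet is one of the tau_jv *)
  (forall F : 'rV[R]_n -> Prop, is_facet (sigma_dual pi) F ->
     exists jv : {ffun 'I_l -> 'I_d}, forall v, F v <-> tau pi jv v) /\
  (* phi_jv exists on M_R *)
  (forall jv : {ffun 'I_l -> 'I_d}, exists w : 'cV[R]_n, is_phi pi jv w) /\
  (* sigma^vee = intersection of the half-spaces phi_jv >= 0 *)
  (forall W : {ffun 'I_l -> 'I_d} -> 'cV[R]_n,
     (forall jv, is_phi pi jv (W jv)) ->
     forall v : 'rV[R]_n,
       sigma_dual pi v <-> (forall jv, 0 <= evalf (W jv) v)).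
Proof.
split.
  move=> jv; have [w hw] := phi_exists pi_ker jv; split.
    exists w; split.
      move=> v [lam [hl0 ->]]; rewrite evalf_sum; apply: sumr_ge0 => p _.
      by apply: mulr_ge0 => //; exact: (phi_pos hw).
    by move=> v; exact: tau_face hw v.
  by exists #|Tset jv|; split; [exact: dim_sigma | exact: dim_tau].
split.
  move=> jv jv' e; apply/ffunP => i; apply/eqP; apply/negPn/negP => ne.
  have [w' hw'] := phi_exists pi_ker jv'.
  have h : tau pi jv (gg pi (i, jv' i)).
    apply: (@gen_in_cone _ _ _ (fun p : 'I_l * 'I_d => p.2 != jv p.1) (gg pi) (i, jv' i)).
    by rewrite /= eq_sym.
  have [_ h0] := proj1 (tau_face hw' _) (proj1 (e _) h).
  by move: h0; rewrite /gg hw' eqxx => /eqP; rewrite oner_eq0.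
split; first by move=> F; exact: facet_is_tau pi_ker F.
split; first by move=> jv; exact: phi_exists pi_ker jv.
move=> W hW v; split.
  move=> [lam [hl0 ->]] jv; rewrite evalf_sum; apply: sumr_ge0 => p _.
  by apply: mulr_ge0 => //; exact: (phi_pos (hW jv)).
exact: (sigma_of_phi hd pi_surj pi_ker hW (v:=v)).
Qed.
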